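(* Let $(\mathcal{A}',\mathcal{A},\mathcal{A}'')$ and $(\mathcal{B}',\mathcal{B},\mathcal{B}'')$ be two recollements of abelian categories. Suppose there are functors $F:\mathcal{A}\to\mathcal{B}$, $F':\mathcal{A}'\to\mathcal{B}'$ and $F'':\mathcal{A}''\to\mathcal{B}''$ such that: (1) $F$ and $F'$ are equivalences of categories; (2) the functors $j^*F$ and $F''j^*$ are naturally isomorphic; (3) the functors $i_*F'$ and $Fi_*$ are naturally isomorphic. Then $F''$ is full and essentially surjective.
   Context: A recollement $(\mathcal{A}',\mathcal{A},\mathcal{A}'')$ of abelian categories consists of functors $i_*:\mathcal{A}'\to\mathcal{A}$, $i^*,i^!:\mathcal{A}\to\mathcal{A}'$, $j^*:\mathcal{A}\to\mathcal{A}''$, $j_!,j_*:\mathcal{A}''\to\mathcal{A}$ such that: there are adjunctions $(j_!,j^* )$, $(j^*,j_* )$, $(i^*,i_* )$, $(i_*,i^!)$; the units $\mathrm{id}\to i^!i_*$ and $\mathrm{id}\to j^*j_!$ are isomorphisms; the counits $i^*i_*\to\mathrm{id}$ and $j^*j_*\to\mathrm{id}$ are isomorphisms; and $i_*$ is an embedding onto the full subcategory of objects $A$ with $j^*A=0$. The same notation $i_*,i^*,i^!,j^*,j_!,j_*$ is used for the functors of both recollements. *)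

(* Defs.v *)
From HB Require Import structures.
From mathcomp Require Import all_boot all_algebra.
Set Implicit Arguments. Unset Strict Implicit. Unset Printing Implicit Defensive.
Import GRing.Theory.
Local Open Scope ring_scope.

Record precat := PreCat {
  ob :> Type;
  hom : ob -> ob -> zmodType;
  idm : forall a, hom a a;
  comp : forall a b c, hom b c -> hom a b -> hom a c;
  comp_idl : forall a b (f : hom a b), comp (idm b) f = f;
  comp_idr : forall a b (f : hom a b), comp f (idm a) = f;
  comp_assoc : forall a b c d (f : hom c d) (g : hom b c) (h : hom a b),
      comp f (comp g h) = comp (comp f g) h;
  comp_addl : forall a b c (f g : hom b c) (h : hom a b),
      comp (f + g) h = comp f h + comp g h;
  comp_addr : forall a b c (f : hom b c) (g h : hom a b),
      comp f (g + h) = comp f g + comp f h }.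
Arguments hom {p} a b.
Arguments idm {p} a.
Arguments comp {p a b c} f g.

Section Basic.
Variable C : precat.

Definition is_zero_ob (z : C) : Prop :=
  forall y : C, (forall f : hom z y, f = 0) /\ (forall f : hom y z, f = 0).

Definition is_iso (a b : C) (f : hom a b) : Prop :=
  exists g : hom b a, comp g f = idm a /\ comp f g = idm b.

Definition iso_ob (a b : C) : Prop := exists f : hom a b, is_iso f.

Definition is_mono (a b : C) (m : hom a b) : Prop :=
  forall x (g h : hom x a), comp m g = comp m h -> g = h.

Definition is_epi (a b : C) (e : hom a b) : Prop :=
  forall x (g h : hom b x), comp g e = comp h e -> g = h.

Definition is_kernel (k a b : C) (f : hom a b) (m : hom k a) : Prop :=
  comp f m = 0 /\
  forall x (g : hom x a), comp f g = 0 -> exists! u : hom x k, comp m u = g.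

Definition is_cokernel (a b c : C) (f : hom a b) (e : hom b c) : Prop :=
  comp e f = 0 /\
  forall x (g : hom b x), comp g f = 0 -> exists! u : hom c x, comp u e = g.

Definition is_abelian : Prop :=
  (exists z : C, is_zero_ob z) /\
  (forall a b : C, exists (c : C) (i1 : hom a c) (i2 : hom b c)
       (p1 : hom c a) (p2 : hom c b),
       [/\ comp p1 i1 = idm a, comp p2 i2 = idm b,
           comp p1 i2 = 0, comp p2 i1 = 0 &
           comp i1 p1 + comp i2 p2 = idm c]) /\
  (forall (a b : C) (f : hom a b), exists (k : C) (m : hom k a), is_kernel f m) /\
  (forall (a b : C) (f : hom a b), exists (c : C) (e : hom b c), is_cokernel f e) /\
  (forall (a b : C) (m : hom a b), is_mono m ->
       exists (c : C) (f : hom b c), is_kernel f m) /\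
  (forall (a b : C) (e : hom a b), is_epi e ->
       exists (c : C) (f : hom c a), is_cokernel f e).
End Basic.

(* Functors (not required to be additive). *)
Record functor (C D : precat) := Functor {
  fob :> C -> D;
  fmap : forall a b : C, hom a b -> hom (fob a) (fob b);
  fmap_id : forall a, fmap (idm a) = idm (fob a);
  fmap_comp : forall a b c (f : hom b c) (g : hom a b),
      fmap (comp f g) = comp (fmap f) (fmap g) }.
Arguments fmap {C D} f0 {a b} f.

Definition idF (C : precat) : functor C C.
Proof. by refine (@Functor C C (fun a => a) (fun a b f => f) _ _). Defined.

Definition fcomp (C D E : precat) (G : functor D E) (F : functor C D) : functor C E.
Proof.
refine (@Functor C E (fun a => G (F a)) (fun a b f => fmap G (fmap F f)) _ _).
- by move=> a; rewrite !fmap_id.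
- by move=> a b c f g; rewrite !fmap_comp.
Defined.

Record nat_trans (C D : precat) (F G : functor C D) := NatTrans {
  nt :> forall a : C, hom (F a) (G a);
  nt_nat : forall (a b : C) (f : hom a b),
      comp (nt b) (fmap F f) = comp (fmap G f) (nt a) }.

Definition nat_iso (C D : precat) (F G : functor C D) : Prop :=
  exists eta : nat_trans F G, forall a, is_iso (eta a).

Record adjunction (C D : precat) (L : functor C D) (R : functor D C) := Adjunction {
  adj_unit : nat_trans (idF C) (fcomp R L);
  adj_counit : nat_trans (fcomp L R) (idF D);
  adj_tri1 : forall a : C,
      comp (adj_counit (L a)) (fmap L (adj_unit a)) = idm (L a);
  adj_tri2 : forall b : D,
      comp (fmap R (adj_counit b)) (adj_unit (R b)) = idm (R b) }.

Definition full (C D : precat) (F : functor C D) : Prop :=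
  forall (a b : C) (g : hom (F a) (F b)), exists f : hom a b, fmap F f = g.

Definition faithful (C D : precat) (F : functor C D) : Prop :=
  forall (a b : C) (f g : hom a b), fmap F f = fmap F g -> f = g.

Definition ess_surj (C D : precat) (F : functor C D) : Prop :=
  forall b : D, exists a : C, iso_ob (F a) b.

Definition is_equivalence (C D : precat) (F : functor C D) : Prop :=
  exists G : functor D C, nat_iso (fcomp G F) (idF C) /\ nat_iso (fcomp F G) (idF D).

Record recollement (A' A A'' : precat) := Recollement {
  i_lower : functor A' A;
  i_upper : functor A A';
  i_shriek : functor A A';
  j_upper : functor A A'';
  j_shriek : functor A'' A;
  j_lower : functor A'' A;
  adj_j_shriek : adjunction j_shriek j_upper;
  adj_j_lower : adjunction j_upper j_lower;
  adj_i_upper : adjunction i_upper i_lower;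
  adj_i_lower : adjunction i_lower i_shriek;
  unit_i_lower_iso : forall x, is_iso (adj_unit adj_i_lower x);
  unit_j_shriek_iso : forall x, is_iso (adj_unit adj_j_shriek x);
  counit_i_upper_iso : forall x, is_iso (adj_counit adj_i_upper x);
  counit_j_lower_iso : forall x, is_iso (adj_counit adj_j_lower x);
  (* i_* is an embedding onto the full subcategory {A | j^* A = 0} *)
  i_lower_full : full i_lower;
  i_lower_faithful : faithful i_lower;
  i_lower_image : forall a : A,
      is_zero_ob (j_upper a) <-> exists x : A', iso_ob (i_lower x) a }.

(* Main.v *)
From Pilot Require Import Defs.
From mathcomp Require Import all_boot all_algebra.
Import GRing.Theory.
Import Pilot.Defs.
Set Implicit Arguments. Unset Strict Implicit. Unset Printing Implicit Defensive.
Local Open Scope ring_scope.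

Section Cat.
Variable C : precat.

Lemma comp0r (a b c : C) (f : hom b c) : comp f (0 : hom a b) = 0.
Proof.
have H := comp_addr f (0 : hom a b) 0; rewrite addr0 in H.
by move/(congr1 (fun x => x - comp f 0)): H; rewrite subrr addrK => <-.
Qed.

Lemma comp0l (a b c : C) (f : hom a b) : comp (0 : hom b c) f = 0.
Proof.
have H := comp_addl (0 : hom b c) 0 f; rewrite addr0 in H.
by move/(congr1 (fun x => x - comp 0 f)): H; rewrite subrr addrK => <-.
Qed.

Lemma comp_oppl (a b c : C) (f : hom b c) (g : hom a b) : comp (- f) g = - comp f g.
Proof.
have H := comp_addl f (- f) g; rewrite subrr comp0l in H.
by apply/eqP; rewrite -addr_eq0 addrC -H.
Qed.

Lemma zero_of_id (z : C) : idm z = 0 -> is_zero_ob z.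
Proof.
move=> H y; split=> f.
- by rewrite -(comp_idr f) H comp0r.
- by rewrite -(comp_idl f) H comp0l.
Qed.

Lemma zero_into (z : C) : is_zero_ob z -> forall y (f g : hom y z), f = g.
Proof. by move=> Hz y f g; rewrite ((Hz y).2 f) ((Hz y).2 g). Qed.

Lemma zero_outof (z : C) : is_zero_ob z -> forall y (f g : hom z y), f = g.
Proof. by move=> Hz y f g; rewrite ((Hz y).1 f) ((Hz y).1 g). Qed.

Lemma iso_comp (a b c : C) (f : hom a b) (g : hom b c) :
  is_iso f -> is_iso g -> is_iso (comp g f).
Proof.
case=> f' [H1 H2] [g' [H3 H4]]; exists (comp f' g'); split.
- by rewrite -comp_assoc (comp_assoc g' g f) H3 comp_idl H1.
- by rewrite -comp_assoc (comp_assoc f f' g') H2 comp_idl H4.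
Qed.

Lemma iso_inv (a b : C) (f : hom a b) : is_iso f ->
  exists g : hom b a, [/\ is_iso g, comp g f = idm a & comp f g = idm b].
Proof. by case=> g [H1 H2]; exists g; split => //; exists f. Qed.

Lemma cancel_r (a b : C) (x : hom b a) (y : hom a b) :
  comp x y = idm a -> forall c (k : hom c a), comp x (comp y k) = k.
Proof. by move=> H c k; rewrite comp_assoc H comp_idl. Qed.

Lemma iso_idm (a : C) : is_iso (idm a).
Proof. by exists (idm a); rewrite comp_idl. Qed.

End Cat.

Lemma fmap_iso (C D : precat) (F : functor C D) (a b : C) (f : hom a b) :
  is_iso f -> is_iso (fmap F f).
Proof. by case=> g [H1 H2]; exists (fmap F g); rewrite -!fmap_comp H1 H2 !fmap_id. Qed.

Lemma equiv_full_esurj (C D : precat) (F : functor C D) :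
  is_equivalence F -> full F /\ ess_surj F.
Proof.
case=> G [[nu Hnu] [mu Hmu]].
have Gfaith : forall (x y : D) (u v : hom x y), fmap G u = fmap G v -> u = v.
  move=> x y u v E.
  have [mi [_ _ Hm]] := iso_inv (Hmu x).
  have Nu := nt_nat mu u; have Nv := nt_nat mu v; simpl in Nu, Nv.
  rewrite -(comp_idr u) -(comp_idr v) -Hm !comp_assoc -Nu -Nv E //.
split; last first.
  by move=> b; exists (G b); exists (mu b); apply: Hmu.
move=> a b g.
have [na [_ Ha1 Ha2]] := iso_inv (Hnu a).
have [nb [_ Hb1 Hb2]] := iso_inv (Hnu b).
exists (comp (nu b) (comp (fmap G g) na)).
apply: Gfaith.
have N := nt_nat nu (comp (nu b) (comp (fmap G g) na)); simpl in N.
rewrite -[fmap G (fmap F _)]comp_idl -Hb1 -comp_assoc N.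
rewrite -!comp_assoc.
by rewrite (cancel_r Hb1) Ha1 comp_idr.
Qed.

Section Adj.
Variables (C D : precat) (L : functor C D) (R : functor D C) (adj : adjunction L R).
Local Notation eta := (adj_unit adj).
Local Notation eps := (adj_counit adj).

Lemma transR (w : C) (b : D) (v : hom w (R b)) :
  v = comp (fmap R (comp (eps b) (fmap L v))) (eta w).
Proof.
rewrite fmap_comp -comp_assoc.
have H := nt_nat eta v; simpl in H.
by rewrite -H comp_assoc adj_tri2 comp_idl.
Qed.

Lemma transL (a : C) (x : D) (u : hom (L a) x) :
  u = comp (eps x) (fmap L (comp (fmap R u) (eta a))).
Proof.
rewrite fmap_comp comp_assoc.
have H := nt_nat eps u; simpl in H.
by rewrite H -comp_assoc adj_tri1 comp_idr.
Qed.

Lemma ladj_epi (a b : C) (e : hom a b) : is_epi e -> is_epi (fmap L e).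
Proof.
move=> He x g h Hgh; rewrite (transL g) (transL h).
congr (comp _ (fmap L _)); apply: He.
have N := nt_nat eta e; simpl in N.
by rewrite -!comp_assoc N !comp_assoc -!fmap_comp Hgh.
Qed.

Lemma radj_mono (x y : D) (m : hom x y) : is_mono m -> is_mono (fmap R m).
Proof.
move=> Hm w g h Hgh; rewrite (transR g) (transR h).
congr (comp (fmap R _) _); apply: Hm.
have N := nt_nat eps m; simpl in N.
by rewrite !comp_assoc -N -!comp_assoc -!fmap_comp Hgh.
Qed.

Lemma radj_into_zero (z : D) : is_zero_ob z -> forall w (f g : hom w (R z)), f = g.
Proof.
move=> Hz w f g; rewrite (transR f) (transR g).
by rewrite (zero_into Hz (comp (eps z) (fmap L f)) (comp (eps z) (fmap L g))).
Qed.

Lemma radj_0 : (exists z : D, is_zero_ob z) -> forall (x y : D), fmap R (0 : hom x y) = 0.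
Proof.
case=> z Hz x y.
have -> : (0 : hom x y) = comp (0 : hom z y) (0 : hom x z) by rewrite comp0r.
by rewrite fmap_comp (radj_into_zero Hz (fmap R (0 : hom x z)) 0) comp0r.
Qed.

Lemma ladj_into_Rzero (x : D) : is_zero_ob (R x) -> forall a (u v : hom (L a) x), u = v.
Proof.
move=> Hx a u v; rewrite (transL u) (transL v).
by rewrite (zero_into Hx (comp (fmap R u) (eta a)) (comp (fmap R v) (eta a))).
Qed.

Lemma radj_from_Lzero (w : C) : is_zero_ob (L w) -> forall b (u v : hom w (R b)), u = v.
Proof.
move=> Hw b u v; rewrite (transR u) (transR v).
by rewrite (zero_outof Hw (comp (eps b) (fmap L u)) (comp (eps b) (fmap L v))).
Qed.

End Adj.

Lemma full_0 (C D : precat) (F : functor C D) : full F ->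
  (exists z : C, is_zero_ob z) -> forall (a b : C), fmap F (0 : hom a b) = 0.
Proof.
move=> hF [z Hz] a b.
have Fz : idm (F z) = 0.
  have [f1 E1] := hF z z (idm (F z)); have [f2 E2] := hF z z 0.
  by rewrite -E1 -E2 (zero_into Hz f1 f2).
have -> : (0 : hom a b) = comp (0 : hom z b) (0 : hom a z) by rewrite comp0r.
by rewrite fmap_comp -[fmap F (0 : hom a z)]comp_idl Fz comp0l comp0r.
Qed.
Lemma factor (D E : precat) (hD : is_abelian D) (L : functor E D) (R : functor D E)
  (J : functor E D) (adjS : adjunction L R) (adjL : adjunction R J)
  (Hu : forall x, is_iso (adj_unit adjS x)) (X Y : D)
  (PX : forall Cc : D, is_zero_ob (R Cc) -> forall u : hom X Cc, u = 0)
  (PY : forall Cc : D, is_zero_ob (R Cc) -> forall u : hom Cc Y, u = 0)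
  (phi : hom (L (R X)) Y) :
  exists h : hom X Y, comp h (adj_counit adjS X) = phi.
Proof.
have Dz : exists z : D, is_zero_ob z := hD.1.
have tri : comp (fmap R (adj_counit adjS X)) (adj_unit adjS (R X)) = idm (R X)
  := adj_tri2 adjS X.
have tri' : comp (adj_unit adjS (R X)) (fmap R (adj_counit adjS X)) = idm (R (L (R X))).
  case: (Hu (R X)) => th [H1 H2].
  have Ee : fmap R (adj_counit adjS X) = th.
    by rewrite -[fmap R _]comp_idr -H2 comp_assoc tri comp_idl.
  by rewrite Ee.
have epi : is_epi (adj_counit adjS X).
  case: hD => _ [_ [_ [hcok _]]].
  case: (hcok _ _ (adj_counit adjS X)) => Cc [c [Hc0 Hcu]].
  have Rc0 : fmap R c = 0.
    by rewrite -[fmap R c]comp_idr -tri comp_assoc -fmap_comp Hc0 (radj_0 adjS Dz) comp0l.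
  have cepi : is_epi c.
    move=> x g h Hgh.
    have H0 : comp (comp g c) (adj_counit adjS X) = 0 by rewrite -comp_assoc Hc0 comp0r.
    case: (Hcu x _ H0) => u [_ Hu'].
    by rewrite -(Hu' g) // (Hu' h).
  have RC : is_zero_ob (R Cc).
    apply: zero_of_id; apply: (ladj_epi adjL cepi).
    by rewrite comp_idl Rc0 !comp0l.
  have c0 : c = 0 := PX _ RC c.
  move=> x g h Hgh.
  have H : comp (g - h) (adj_counit adjS X) = 0.
    by rewrite comp_addl comp_oppl Hgh subrr.
  case: (Hcu x (g - h) H) => u [Hu1 _].
  by move: Hu1; rewrite c0 comp0r => /eqP; rewrite eq_sym subr_eq0 => /eqP.
case: hD => _ [_ [hker [_ [_ hepi]]]].
case: (hepi _ _ _ epi) => W [f [Hf0 Hfu]].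
case: (hker _ _ (adj_counit adjS X)) => K [k [Hk0 Hku]].
case: (Hku _ f Hf0) => u [Hu1 _].
have Rk0 : fmap R k = 0.
  by rewrite -[fmap R k]comp_idl -tri' -comp_assoc -fmap_comp Hk0 (radj_0 adjS Dz) comp0r.
have kmono : is_mono k.
  move=> x g h Hgh.
  have H0 : comp (adj_counit adjS X) (comp k g) = 0 by rewrite comp_assoc Hk0 comp0l.
  case: (Hku x _ H0) => v [_ Hv].
  by rewrite -(Hv g) // (Hv h).
have RK : is_zero_ob (R K).
  apply: zero_of_id; apply: (radj_mono adjS kmono).
  by rewrite comp_idr Rk0 !comp0r.
have : comp phi f = 0 by rewrite -Hu1 comp_assoc (PY _ RK (comp phi k)) comp0l.
by case/(Hfu _ phi) => h [Hh _]; exists h.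
Qed.
Theorem lemma4p4 (A' A A'' B' B B'' : precat)
  (hA' : is_abelian A') (hA : is_abelian A) (hA'' : is_abelian A'')
  (hB' : is_abelian B') (hB : is_abelian B) (hB'' : is_abelian B'')
  (RA : recollement A' A A'') (RB : recollement B' B B'')
  (F : functor A B) (F' : functor A' B') (F'' : functor A'' B'') :
  is_equivalence F -> is_equivalence F' ->
  nat_iso (fcomp (j_upper RB) F) (fcomp F'' (j_upper RA)) ->
  nat_iso (fcomp (i_lower RB) F') (fcomp F (i_lower RA)) ->
  full F'' /\ ess_surj F''.
Proof.
move=> eqF eqF' [al Hal] [be Hbe].
have [Ffull Fes] := equiv_full_esurj eqF.
have [_ F'es] := equiv_full_esurj eqF'.
have Az : exists z : A, is_zero_ob z := hA.1.
have transfer : forall Cc : B, is_zero_ob (j_upper RB Cc) ->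
    exists (z' : A') (psi : hom (F (i_lower RA z')) Cc) (psi' : hom Cc (F (i_lower RA z'))),
      [/\ comp psi psi' = idm Cc, comp psi' psi = idm _ &
          is_zero_ob (j_upper RA (i_lower RA z'))].
  move=> Cc HC.
  case: ((i_lower_image RB Cc).1 HC) => z [s Hs].
  case: (F'es z) => z' [t Ht].
  have [bi [Hbi _ _]] := iso_inv (Hbe z').
  have Hpsi : is_iso (comp s (comp (fmap (i_lower RB) t) bi)).
    apply: iso_comp => //; apply: iso_comp => //; exact: fmap_iso.
  have [psi' [_ H1 H2]] := iso_inv Hpsi.
  exists z', (comp s (comp (fmap (i_lower RB) t) bi)), psi'; split => //.
  apply/(i_lower_image RA); exists z'; exists (idm _); exact: iso_idm.
split; last first.
  move=> b.
  have [a [s Hs]] := Fes (j_shriek RB b).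
  exists (j_upper RA a).
  have [ai [Hai _ _]] := iso_inv (Hal a).
  have [th [Hth _ _]] := iso_inv (unit_j_shriek_iso RB b).
  exists (comp th (comp (fmap (j_upper RB) s) ai)).
  apply: iso_comp => //; apply: iso_comp => //; exact: fmap_iso.
move=> a1 a2 g.
pose X := F (j_shriek RA a1).
pose Y := F (j_lower RA a2).
have PX : forall Cc : B, is_zero_ob (j_upper RB Cc) -> forall u : hom X Cc, u = 0.
  move=> Cc HC u.
  have [z' [psi [psi' [H1 H2 Hz]]]] := transfer Cc HC.
  have [v Hv] := Ffull _ _ (comp psi' u).
  have v0 : v = 0 := ladj_into_Rzero (adj_j_shriek RA) Hz v 0.
  by rewrite -[u]comp_idl -H1 -comp_assoc -Hv v0 (full_0 Ffull Az) comp0r.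
have PY : forall Cc : B, is_zero_ob (j_upper RB Cc) -> forall u : hom Cc Y, u = 0.
  move=> Cc HC u.
  have [z' [psi [psi' [H1 H2 Hz]]]] := transfer Cc HC.
  have [v Hv] := Ffull _ _ (comp u psi).
  have v0 : v = 0 := radj_from_Lzero (adj_j_lower RA) Hz v 0.
  by rewrite -[u]comp_idr -H1 comp_assoc -Hv v0 (full_0 Ffull Az) comp0l.
have [th1 [_ Hth1 Hth1']] := iso_inv (unit_j_shriek_iso RA a1).
have [e2i [_ He2 He2']] := iso_inv (counit_j_lower_iso RA a2).
have [alXi [_ HalX HalX']] := iso_inv (Hal (j_shriek RA a1)).
have [alYi [_ HalY HalY']] := iso_inv (Hal (j_lower RA a2)).
pose gt := comp alYi (comp (fmap F'' e2i) (comp g (comp (fmap F'' th1) (al (j_shriek RA a1))))).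
have [h Hh] := factor hB (adj_j_lower RB) (unit_j_shriek_iso RB) PX PY
  (comp (adj_counit (adj_j_shriek RB) Y) (fmap (j_shriek RB) gt)).
have Hjh : fmap (j_upper RB) h = gt.
  rewrite [in RHS](transR (adj_j_shriek RB) gt) -Hh fmap_comp -comp_assoc.
  by rewrite (adj_tri2 (adj_j_shriek RB)) comp_idr.
have [f Hf] := Ffull _ _ h.
exists (comp (adj_counit (adj_j_lower RA) a2) (comp (fmap (j_upper RA) f) (adj_unit (adj_j_shriek RA) a1))).
have N := nt_nat al f; simpl in N.
have Nf : fmap F'' (fmap (j_upper RA) f) = comp (al (j_lower RA a2)) (comp (fmap (j_upper RB) h) alXi).
  by rewrite comp_assoc -Hf N -comp_assoc HalX' comp_idr.
rewrite !fmap_comp Nf Hjh /gt -!comp_assoc.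
rewrite (cancel_r HalY') (comp_assoc (fmap F'' _) (fmap F'' e2i)) -fmap_comp He2' fmap_id comp_idl.
by rewrite (cancel_r HalX') -fmap_comp Hth1 fmap_id comp_idr.
Qed.
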